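(* For any finite graph $G$, if the VC-dimension of $\mathcal{B}(G)$ is at least $3$, then the VC-dimension of $\mathcal{B}(G)$ is at most $\nu_{\mathrm{bi}}(G)$.
   Context: $\mathrm{MIS}(G)$ is the set of maximal independent sets of $G$; $\mathcal{B}(G)=\{K_v: v\in V(G)\}$ with $K_v=\{I\in\mathrm{MIS}(G): v\in I\}$, a set system on ground set $\mathrm{MIS}(G)$. The VC-dimension of a set system $\mathcal{F}$ on ground set $X$ is the largest $d$ such that some $S\subseteq X$ with $|S|=d$ satisfies: for every $B\subseteq S$ there is $A\in\mathcal{F}$ with $A\cap S=B$. $\nu_{\mathrm{bi}}(G)$ is the largest $t$ such that $G$ has $2t$ distinct vertices $u_1,\dots,u_t,v_1,\dots,v_t$ with $u_iv_j\in E(G)$ iff $i=j$. *)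

(* Defs.v *)
From mathcomp Require Import all_boot.
Set Implicit Arguments. Unset Strict Implicit. Unset Printing Implicit Defensive.

Definition simple_graph (T : finType) (e : rel T) : Prop :=
  symmetric e /\ irreflexive e.

Section Defs.
Variables (T : finType) (e : rel T).

Definition independent (I : {set T}) : bool :=
  [forall x in I, forall y in I, ~~ e x y].

Definition MIS : {set {set T}} :=
  [set I | independent I &&
           [forall J : {set T}, (independent J && (I \subset J)) ==> (J == I)]].

Definition Kv (v : T) : {set {set T}} := [set I in MIS | v \in I].

(* the set system B(G) = { K_v : v in V(G) } on ground set MIS(G) *)
Definition Bsys : {set {set {set T}}} := [set Kv v | v in T].

Definition shattered (F : {set {set {set T}}}) (S : {set {set T}}) : bool :=
  (S \subset MIS) &&
  [forall B : {set {set T}}, (B \subset S) ==> [exists A in F, A :&: S == B]].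

(* VC-dimension: largest size of a shattered subset of the ground set
   (0 if none exists). *)
Definition vcdim (F : {set {set {set T}}}) : nat :=
  \max_(S : {set {set T}} | shattered F S) #|S|.

Definition has_bi (t : nat) : bool :=
  [exists u : {ffun 'I_t -> T}, exists v : {ffun 'I_t -> T},
     [&& injectiveb u, injectiveb v,
         [forall i, forall j, u i != v j] &
         [forall i, forall j, e (u i) (v j) == (i == j)]]].

(* nu_bi(G); such t satisfy 2t <= |V(G)|, so the max is over t <= |V(G)| *)
Definition nu_bi : nat := \max_(t < #|T|.+1 | has_bi t) t.

End Defs.

(* Main.v *)
Require Import Defs.
From mathcomp Require Import all_boot.

Section Aux.
Variables (T : finType) (e : rel T).
Hypothesis sg : simple_graph e.

Lemma indepP (I : {set T}) x y : independent e I -> x \in I -> y \in I -> ~~ e x y.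
Proof. by move=> /forall_inP H xI yI; move: (H x xI) => /forall_inP /(_ y yI). Qed.

Lemma mis_nb (I : {set T}) v : I \in MIS e -> v \notin I -> exists w, (w \in I) && e w v.
Proof.
case: sg => sym irr.
rewrite inE => /andP[indI /forallP maxI] vI.
case: (boolP [exists w, (w \in I) && e w v]) => [/existsP//|Hno].
exfalso; move: (maxI (v |: I)).
have -> : independent e (v |: I).
  apply/forall_inP => x; rewrite in_setU1 => /predU1P[->|xI];
  apply/forall_inP => y; rewrite in_setU1 => /predU1P[->|yI].
  - by rewrite irr.
  - rewrite sym; apply/negP => H; move/negP: Hno; apply; apply/existsP; exists y; by rewrite yI.
  - apply/negP => H; move/negP: Hno; apply; apply/existsP; exists x; by rewrite xI.
  - exact: indepP indI xI yI.
rewrite subsetUr /= => /eqP H.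
by move: vI; rewrite -H setU11.
Qed.
End Aux.
Arguments indepP {T e I x y}.
Arguments mis_nb {T e} sg {I v}.

Theorem lemma2p13 (T : finType) (e : rel T) :
  simple_graph e ->
  3 <= vcdim e (Bsys e) ->
  vcdim e (Bsys e) <= nu_bi e.
Proof.
move=> sg H3.
have [S shS HS] : {S | shattered e (Bsys e) S & vcdim e (Bsys e) = #|S|}.
  rewrite /vcdim; apply: eq_bigmax_cond.
  case: (posnP #|[pred S | shattered e (Bsys e) S]|) => // /eqP.
  rewrite -/(pred0b _) => /pred0P H0.
  by move: H3; rewrite /vcdim (eq_bigl _ _ H0) big_pred0_eq.
rewrite HS in H3 *.
set n := #|S| in H3 *.
move: shS; rewrite /shattered => /andP[SM /forallP shB].
pose I (i : 'I_n) := enum_val i : {set T}.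
have IS i : I i \in S by apply: enum_valP.
have IM i : I i \in MIS e by apply: (subsetP SM).
have Iinj : injective I by apply: enum_val_inj.
have Hv i : exists v, (v \notin I i) && [forall j, (j != i) ==> (v \in I j)].
  move: (shB (S :\ I i)); rewrite subD1set => /existsP[A /andP[/imsetP[v _ ->] /eqP HA]].
  exists v; apply/andP; split.
    apply/negP => vI.
    have : I i \in Kv e v :&: S by rewrite /Kv in_setI in_set vI IS !andbT IM.
    by rewrite HA !inE eqxx.
  apply/forallP => j; apply/implyP => ji.
  have : I j \in S :\ I i by rewrite !inE IS (inj_eq Iinj) ji.
  by rewrite -HA /Kv !inE => /andP[/andP[_ ->]].
pose v := [ffun i => xchoose (Hv i)].
have vP i : (v i \notin I i) /\ forall j, j != i -> v i \in I j.
  rewrite ffunE; move: (xchooseP (Hv i)) => /andP[-> /forallP H]; split=> // j ji.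
  by move: (H j); rewrite ji.
have Hu i : exists w, (w \in I i) && e w (v i).
  by apply: mis_nb => //; case: (vP i).
pose u := [ffun i => xchoose (Hu i)].
have uP i : (u i \in I i) /\ e (u i) (v i).
  by rewrite ffunE; move: (xchooseP (Hu i)) => /andP[-> ->].
have indI i : independent e (I i) by move: (IM i); rewrite inE => /andP[].
have uN i j : j != i -> u i \notin I j.
  move=> ji; apply/negP => uj.
  by move: (indepP (indI j) uj ((vP i).2 j ji)); rewrite (uP i).2.
have hb : has_bi e n.
  apply/existsP; exists u; apply/existsP; exists v.
  apply/and4P; split.
  - apply/injectiveP => i j Huij; apply/eqP; apply/negPn/negP => ij.
    move: (uN j i ij); rewrite -Huij; by case: (uP i) => ->.
  - apply/injectiveP => i j Hvij; apply/eqP; apply/negPn/negP => ij.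
    move: ((vP j).2 i ij); rewrite -Hvij; by case: (vP i) => /negbTE ->.
  - apply/forallP => i; apply/forallP => j; apply/negP => /eqP Heq.
    case: (eqVneq i j) Heq => [<-|ij] Heq.
      by move: (uP i).1 (vP i).1; rewrite Heq => ->.
    have /subsetPn [k _ Hk] : ~~ ([set: 'I_n] \subset [set i; j]).
      apply/negP => /subset_leq_card; rewrite cardsT card_ord cards2.
      by move=> Hc; move: H3; rewrite ltnNge; apply/negP/negPn; apply: leq_trans Hc _; case: (i != j).
    move: Hk; rewrite !inE negb_or => /andP[ki kj].
    move: (uN i k ki); rewrite Heq (vP j).2 //.
  - apply/forallP => i; apply/forallP => j.
    case: (eqVneq i j) => [<-|ij]; first by rewrite (uP i).2.
    apply/eqP/negbTE; apply: (indepP (indI i)); first exact: (uP i).1.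
    exact: (vP j).2 _ ij.
have nT : n < #|T|.+1.
  rewrite ltnS; have /injectiveP vi : injectiveb v.
    by move: hb => _; apply/injectiveP => i j Hvij; apply/eqP; apply/negPn/negP => ij;
      move: ((vP j).2 i ij); rewrite -Hvij; case: (vP i) => /negbTE ->.
  by rewrite -[n]card_ord; apply: leq_card vi.
rewrite /nu_bi.
exact: (@leq_bigmax_cond _ (fun t : 'I_#|T|.+1 => has_bi e t) (fun t => nat_of_ord t) (Ordinal nT) hb).
Qed.
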